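(* Let $t\geq 1$ and let $M$ be a Sidon set in $\mathbb{F}_2^t$ with $|M| > s_{\max}(t-1)$. Then (a) $\{m_1+m_2+m_3+m_4 : m_1,m_2,m_3,m_4\in M\} = \mathbb{F}_2^t$; and (b) $\dim \langle M\rangle = \dim \langle \{m_1+m_2 : m_1,m_2\in M,\ m_1\neq m_2\}\rangle = t$, where $\langle\cdot\rangle$ denotes linear span.
   Context: $\mathbb{F}_2^t$ is the $t$-dimensional vector space over $\mathbb{F}_2$. A subset $M\subseteq \mathbb{F}_2^t$ is Sidon if $m_1+m_2\neq m_3+m_4$ for all pairwise distinct $m_1,m_2,m_3,m_4\in M$. $s_{\max}(t)$ denotes the maximum size of a Sidon set in $\mathbb{F}_2^t$ (with $s_{\max}(0)=1$). In (a) the $m_i$ need not be distinct. *)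

(* Defs.v *)
From HB Require Import structures.
From mathcomp Require Import all_boot all_order all_algebra all_field.
Set Implicit Arguments. Unset Strict Implicit. Unset Printing Implicit Defensive.
Import GRing.Theory.
Local Open Scope ring_scope.

Notation F2t t := 'rV['F_2]_t.

Definition sidon (t : nat) (M : {set F2t t}) : bool :=
  [forall m1 in M, forall m2 in M, forall m3 in M, forall m4 in M,
     [&& m1 != m2, m1 != m3, m1 != m4, m2 != m3, m2 != m4 & m3 != m4] ==>
     (m1 + m2 != m3 + m4)].

(* maximum size of a Sidon set in F_2^t (for t = 0 this is 1, as F_2^0 has
   a single element). *)
Definition s_max (t : nat) : nat :=
  \max_(A : {set F2t t} | sidon A) #|A|.

Definition sumset2 (t : nat) (M : {set F2t t}) : {set F2t t} :=
  [set m1 + m2 | m1 in M, m2 in M & m1 != m2].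

(* Main.v *)
Require Import Defs.
From mathcomp Require Import all_boot all_order all_algebra all_field.
Import GRing.Theory.

Local Open Scope ring_scope.

Lemma F2add (a : 'F_2) : a + a = 0.
Proof. case: a => [[|[|k]]] Hk; apply/eqP => //. Qed.

Lemma F2cases (a : 'F_2) : a = 0 \/ a = 1.
Proof. case: a => [[|[|k]]] Hk; [left; apply/eqP|right; apply/eqP|] => //. Qed.

Lemma F2eq (a b : 'F_2) : a + b = 0 -> a = b.
Proof. by move=> h; rewrite -[a]addr0 -(F2add b) addrA h add0r. Qed.

Lemma addvv {t} (v : 'rV['F_2]_t) : v + v = 0.
Proof. by apply/rowP => j; rewrite !mxE F2add. Qed.

Lemma add0_eq t (u w : 'rV['F_2]_t) : u + w = 0 -> u = w.
Proof. by move=> h; rewrite -[u]addr0 -(addvv w) addrA h add0r. Qed.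

Lemma dim_full n : \dim (fullv : {vspace 'rV['F_2]_n}) = n.
Proof. by rewrite dimvf /dim /= mul1n. Qed.

Lemma part_a (n : nat) (M : {set 'rV['F_2]_n.+1}) :
  sidon M -> (s_max n < #|M|)%N ->
  forall x : 'rV['F_2]_n.+1, exists m1 m2 m3 m4,
      [/\ m1 \in M, m2 \in M, m3 \in M & m4 \in M] /\ x = m1 + m2 + m3 + m4.
Proof.
move=> sM cM x.
case: (boolP [exists m1 in M, exists m2 in M, exists m3 in M, exists m4 in M,
                x == m1 + m2 + m3 + m4]).
  move=> /exists_inP[m1 M1 /exists_inP[m2 M2 /exists_inP[m3 M3
           /exists_inP[m4 M4 /eqP e]]]].
  by exists m1, m2, m3, m4.
move=> hN; exfalso.
have H : forall m1 m2 m3 m4, m1 \in M -> m2 \in M -> m3 \in M -> m4 \in M ->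
    x <> m1 + m2 + m3 + m4.
  move=> m1 m2 m3 m4 M1 M2 M3 M4 e; move/negP: hN; apply.
  apply/exists_inP; exists m1 => //; apply/exists_inP; exists m2 => //.
  apply/exists_inP; exists m3 => //; apply/exists_inP; exists m4 => //.
  by apply/eqP.
have [m Mm] : exists m, m \in M.
  have : (0 < #|M|)%N by apply: leq_ltn_trans cM.
  by move/card_gt0P.
case: (boolP [exists i, x 0 i != 0]); last first.
  move=> hx; apply: (H m m m m) => //.
  rewrite (addvv m) add0r (addvv m); apply/rowP => j; rewrite !mxE.
  by move/existsPn: hx => /(_ j) /negPn/eqP.
move=> /existsP[i xi].
have xi1 : x 0 i = 1 by case: (F2cases (x 0 i)) xi => ->; rewrite ?eqxx.
pose g (v : 'rV['F_2]_n.+1) : 'rV['F_2]_n :=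
  \row_(j < n) (v 0 (lift i j) + v 0 i * x 0 (lift i j)).
have gD : forall a b, g (a + b) = g a + g b.
  by move=> a b; apply/rowP => j; rewrite !mxE mulrDl addrACA.
have gker : forall v, g v = 0 -> v = 0 \/ v = x.
  move=> v gv.
  have vx : v = v 0 i *: x.
    apply/rowP => k; rewrite mxE.
    case: (unliftP i k) => [j ->|->]; last by rewrite xi1 mulr1.
    have := congr1 (fun w : 'rV_n => w 0 j) gv; rewrite !mxE.
    exact: F2eq.
  case: (F2cases (v 0 i)) => c; rewrite vx c; [left; exact: scale0r|right; exact: scale1r].
have ginj : {in M &, injective g}.
  move=> a b Ma Mb e.
  have : g (a + b) = 0 by rewrite gD e addvv.
  case/gker=> h; first exact: add0_eq.
  exfalso; apply: (H a b a a) => //.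
  by rewrite -h -addrA addvv addr0.
have sA : sidon (g @: M).
  apply/forall_inP => _ /imsetP[a Ma ->]; apply/forall_inP => _ /imsetP[b Mb ->].
  apply/forall_inP => _ /imsetP[c Mc ->]; apply/forall_inP => _ /imsetP[d Md ->].
  apply/implyP => /and5P[h1 h2 h3 h4 /andP[h5 h6]].
  have ne : forall p q, g p != g q -> p != q by move=> p q; apply: contra => /eqP->.
  move/forall_inP: sM => /(_ a Ma) /forall_inP /(_ b Mb) /forall_inP /(_ c Mc)
     /forall_inP /(_ d Md) /implyP.
  have pre : [&& a != b, a != c, a != d, b != c, b != d & c != d] by rewrite !ne.
  move=> /(_ pre) hs.
  apply/negP => /eqP e.
  have : g (a + b + c + d) = 0 by rewrite !gD e -addrA addvv.
  case/gker=> h.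
    by move/negP: hs; apply; apply/eqP; apply: add0_eq; rewrite -addrA in h.
  by apply: (H a b c d).
have : (#|g @: M| <= s_max n)%N by rewrite /s_max; apply: leq_bigmax_cond.
rewrite card_in_imset // => hle.
by move: (leq_ltn_trans hle cM); rewrite ltnn.
Qed.

Theorem theorem1p11 (t : nat) (M : {set 'rV['F_2]_t}) :
  (1 <= t)%N -> sidon M -> (s_max t.-1 < #|M|)%N ->
  (forall x : 'rV['F_2]_t, exists m1 m2 m3 m4,
      [/\ m1 \in M, m2 \in M, m3 \in M & m4 \in M] /\ x = m1 + m2 + m3 + m4)
  /\ \dim <<enum M>>%VS = t /\ \dim <<enum (sumset2 M)>>%VS = t.
Proof.
case: t M => [|n] M // _ sM cM.
have pa := @part_a n M sM cM.
have pair : forall a b, a \in M -> b \in M -> a + b \in <<enum (sumset2 M)>>%VS.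
  move=> a b Ma Mb; case: (eqVneq a b) => [->|ab]; first by rewrite addvv mem0v.
  by apply: memv_span; rewrite mem_enum; apply/imset2P; exists a b => //; rewrite inE Mb.
have full : (fullv <= <<enum (sumset2 M)>>)%VS.
  apply/subvP => x _; have [m1 [m2 [m3 [m4 [[M1 M2 M3 M4] ->]]]]] := pa x.
  by rewrite -addrA; apply: memvD; apply: pair.
have sub : (<<enum (sumset2 M)>> <= <<enum M>>)%VS.
  apply/span_subvP => y; rewrite mem_enum => /imset2P[a b Ma]; rewrite inE => /andP[Mb _] ->.
  by apply: memvD; apply: memv_span; rewrite mem_enum.
have d1 := dimvS full; have d2 := dimvS sub.
have d3 := dimvS (subvf <<enum M>>%VS).
rewrite dim_full in d1 d3.
split => //; split; apply/eqP; rewrite eqn_leq.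
  by rewrite d3 (leq_trans d1 d2).
by rewrite d1 (leq_trans d2 d3).
Qed.
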